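(* Let $f:\mathbb{R}^d\to\mathbb{R}$ be differentiable with $L$-Lipschitz continuous gradient $\nabla f$. Consider the SUM iteration with $\mu\in[0,1)$, $\lambda\in[0,1/(1-\mu)]$ and positive step sizes $\{\eta_t\}$, where the noisy gradients satisfy $\mathbb{E}_t[g_t]=\nabla f(x_t)$ and $\mathbb{E}\|g_t\|^2\le G^2$ for all $t$. Then for every $t\ge1$, $$\mathbb{E}\big[\nabla f(x_t)^T m_t\big]\le -\sum_{k=1}^{t}\mu^{t-k}\eta_k\,\mathbb{E}\|\nabla f(x_k)\|^2+2L\sum_{k=1}^{t-1}\mu^{t-k}\,\mathbb{E}\|m_k\|^2+L\lambda^2G^2\sum_{k=1}^{t-1}\mu^{t-k}\eta_k^2 .$$
   Context: Stochastic unified momentum (SUM) iteration: given $x_1\in\mathbb{R}^d$, set $m_0=0$ and for $t=1,2,\dots$ $$m_t=\mu m_{t-1}-\eta_t g_t,\qquad x_{t+1}=x_t-\lambda\eta_t g_t+(1-\tilde\lambda)m_t,\qquad \tilde\lambda:=(1-\mu)\lambda,$$ where $g_t\in\mathbb{R}^d$ is a random vector (noisy gradient). $\mathbb{E}_t[\cdot]$ denotes the conditional expectation given $g_1,\dots,g_{t-1}$ (so $x_t$ and $m_{t-1}$ are determined by the conditioning), and $\mathbb{E}$ the total expectation. Norms are Euclidean. *)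

(* Defs.v *)
From HB Require Import structures.
From mathcomp Require Import all_boot all_order all_algebra.
From mathcomp Require Import all_classical all_reals all_analysis.
Set Implicit Arguments. Unset Strict Implicit. Unset Printing Implicit Defensive.
Import Order.TTheory GRing.Theory Num.Theory.
Import numFieldNormedType.Exports.
Local Open Scope classical_set_scope.
Local Open Scope ring_scope.

Definition dotv (R : realType) (d : nat) (u v : 'rV[R]_d) : R :=
  \sum_(i < d) u 0 i * v 0 i.
Definition enorm (R : realType) (d : nat) (u : 'rV[R]_d) : R :=
  Num.sqrt (dotv u u).

(* SUM iteration for a fixed realisation of the noisy gradients g : nat -> R^d
   (g t = g_t for t >= 1).  sum_state n = (x_{n+1}, m_n); sum_state 0 = (x_1, m_0 = 0). *)
Fixpoint sum_state (R : realType) (d : nat) (mu lam : R) (eta : nat -> R)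
  (x1 : 'rV[R]_d) (g : nat -> 'rV[R]_d) (n : nat) : 'rV[R]_d * 'rV[R]_d :=
  match n with
  | 0 => (x1, 0)
  | n'.+1 =>
      let st := sum_state mu lam eta x1 g n' in
      let m := mu *: st.2 - eta n'.+1 *: g n'.+1 in
      (st.1 - (lam * eta n'.+1) *: g n'.+1 + (1 - (1 - mu) * lam) *: m, m)
  end.

(* x_t (t >= 1) and m_t (t >= 0). *)
Definition sum_x (R : realType) (d : nat) (mu lam : R) (eta : nat -> R)
  (x1 : 'rV[R]_d) (g : nat -> 'rV[R]_d) (t : nat) : 'rV[R]_d :=
  (sum_state mu lam eta x1 g t.-1).1.
Definition sum_m (R : realType) (d : nat) (mu lam : R) (eta : nat -> R)
  (x1 : 'rV[R]_d) (g : nat -> 'rV[R]_d) (t : nat) : 'rV[R]_d :=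
  (sum_state mu lam eta x1 g t).2.

(* Generators of sigma(g_1, ..., g_{t-1}): preimages of Borel sets under the
   coordinates of g_k, 1 <= k < t. *)
Definition past_gen (dT : measure_display) (T : measurableType dT) (R : realType)
  (d : nat) (g : nat -> T -> 'rV[R]_d) (t : nat) : set (set T) :=
  [set A | exists k (i : 'I_d) (B : set R),
     [/\ (1 <= k < t)%N, measurable B & A = (fun w => g k w 0 i) @^-1` B]].

(* E_t[g_t] = Y : Y is the conditional expectation of g_t given sigma(g_1..g_{t-1}),
   i.e. g_t is integrable, Y is sigma(g_1..g_{t-1})-measurable and integrable, and
   the integrals of g_t and Y agree on every set of sigma(g_1..g_{t-1})
   (coordinatewise). *)
Definition cond_exp_past (dT : measure_display) (T : measurableType dT) (R : realType)
  (P : probability T R) (d : nat) (g : nat -> T -> 'rV[R]_d) (t : nat)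
  (Y : T -> 'rV[R]_d) : Prop :=
  forall i : 'I_d,
    [/\ P.-integrable setT (fun w => (g t w 0 i)%:E),
        P.-integrable setT (fun w => (Y w 0 i)%:E),
        (forall B : set R, measurable B ->
           <<s past_gen g t >> ((fun w => Y w 0 i) @^-1` B)) &
        (forall A : set T, <<s past_gen g t >> A ->
           (\int[P]_(w in A) (g t w 0 i)%:E = \int[P]_(w in A) (Y w 0 i)%:E)%E)].

(* Main.v *)
Require Import Defs.
From HB Require Import structures.
From mathcomp Require Import all_boot all_order all_algebra.
From mathcomp Require Import all_classical all_reals all_analysis.
From mathcomp Require Import ring lra measurable_realfun.
Set Implicit Arguments. Unset Strict Implicit. Unset Printing Implicit Defensive.
Import Order.TTheory GRing.Theory Num.Theory.
Import numFieldNormedType.Exports.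
Local Open Scope classical_set_scope.
Local Open Scope ring_scope.

Section toolkit.
Context {R : realType} {dT : measure_display} {T : measurableType dT}.
Variable P : probability T R.
Implicit Types (f g u v : T -> R).

Definition Int (f : T -> R) := P.-integrable setT (EFin \o f).
Definition Ex (f : T -> R) := Rintegral P setT f.
Definition L2 (u : T -> R) := measurable_fun setT u /\ Int (fun w => u w ^+ 2).

Lemma Int_ext f g : (forall x, f x = g x) -> Int f -> Int g.
Proof. by move=> fg; have -> : g = f by apply/funext => x; rewrite fg. Qed.

Lemma Int_meas f : Int f -> measurable_fun setT f.
Proof. by move=> /integrableP[/measurable_EFinP]. Qed.

Lemma IntD f g : Int f -> Int g -> Int (fun x => f x + g x).
Proof.
move=> If Ig; rewrite /Int.
have -> : (EFin \o (fun x => f x + g x)) = (EFin \o f) \+ (EFin \o g) by apply/funext => x.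
exact: integrableD.
Qed.

Lemma IntZ c f : Int f -> Int (fun x => c * f x).
Proof.
move=> If; rewrite /Int.
have -> : (EFin \o (fun x => c * f x)) = (fun x => c%:E * (EFin \o f) x)%E by apply/funext => x.
exact: integrableZl.
Qed.

Lemma IntB f g : Int f -> Int g -> Int (fun x => f x - g x).
Proof.
move=> If Ig; apply: (Int_ext _ (IntD If (IntZ (-1) Ig))) => x; lra.
Qed.

Lemma Int_cst c : Int (fun _ => c).
Proof. exact: finite_measure_integrable_cst. Qed.

Lemma Int_le f g : measurable_fun setT f -> Int g -> (forall x, `|f x| <= g x) -> Int f.
Proof.
move=> mf Ig fg; apply: le_integrable Ig => //.
  exact/measurable_EFinP.
move=> x _ /=; rewrite !lee_fin (le_trans (fg x))// ?ler_norm // ; exact: (le_trans (normr_ge0 _) (fg x)).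
Qed.

Lemma Int_sum (I : Type) (s : seq I) (F : I -> T -> R) :
  (forall i, Int (F i)) -> Int (fun x => \sum_(i <- s) F i x).
Proof.
move=> IF; rewrite /Int.
have -> : (EFin \o (fun x => \sum_(i <- s) F i x)) = (fun x => \sum_(i <- s) (F i x)%:E)%E.
  by apply/funext => x /=; rewrite sumEFin.
by apply: integrable_sum => // i _; exact: IF.
Qed.

Lemma ExD f g : Int f -> Int g -> Ex (fun x => f x + g x) = Ex f + Ex g.
Proof. by move=> If Ig; apply: RintegralD. Qed.

Lemma ExZ c f : Int f -> Ex (fun x => c * f x) = c * Ex f.
Proof. by move=> If; apply: RintegralZl. Qed.

Lemma ExB f g : Int f -> Int g -> Ex (fun x => f x - g x) = Ex f - Ex g.
Proof. by move=> If Ig; apply: RintegralB. Qed.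

Lemma Ex_le f g : Int f -> Int g -> (forall x, f x <= g x) -> Ex f <= Ex g.
Proof. by move=> If Ig fg; apply: le_Rintegral. Qed.

Lemma Ex_ext f g : (forall x, f x = g x) -> Ex f = Ex g.
Proof. by move=> fg; have -> : g = f by apply/funext => x; rewrite fg. Qed.

Lemma Ex_sum (I : Type) (s : seq I) (F : I -> T -> R) :
  (forall i, Int (F i)) -> Ex (fun x => \sum_(i <- s) F i x) = \sum_(i <- s) Ex (F i).
Proof.
move=> IF; elim: s => [|i s IH].
  rewrite big_nil (Ex_ext (g := fun _ => 0)) => [|x]; last by rewrite big_nil.
  by rewrite /Ex Rintegral_cst // mul0r.
rewrite big_cons -IH -ExD //; last exact: Int_sum.
by apply: Ex_ext => x; rewrite big_cons.
Qed.

Lemma Ex_EFin f : Int f -> (\int[P]_x (f x)%:E)%E = (Ex f)%:E.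
Proof. by move=> If; rewrite /Ex /Rintegral fineK //; exact: integrable_fin_num. Qed.

Lemma L2_cst c : L2 (fun _ => c).
Proof. split; [exact: measurable_cst | exact: Int_cst]. Qed.

Lemma L2_Int_mul u v : L2 u -> L2 v -> Int (fun x => u x * v x).
Proof.
move=> [mu Iu] [mv Iv]; apply: (Int_le _ (IntD Iu Iv)) => [|x].
  exact: measurable_funM.
rewrite normrM.
have : 0 <= (`|u x| - `|v x|) ^+ 2 by apply: sqr_ge0.
rewrite -(real_normK (num_real (u x))) -(real_normK (num_real (v x))).
have := normr_ge0 (u x); have := normr_ge0 (v x); nra.
Qed.

Lemma L2D u v : L2 u -> L2 v -> L2 (fun x => u x + v x).
Proof.
move=> [mu Iu] [mv Iv]; split; first exact: measurable_funD.
apply: (Int_le _ (IntD (IntZ 2 Iu) (IntZ 2 Iv))) => [|x].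
  by apply: measurable_funX; exact: measurable_funD.
rewrite ger0_norm ?sqr_ge0 //.
have := sqr_ge0 (u x - v x); nra.
Qed.

Lemma L2Z c u : L2 u -> L2 (fun x => c * u x).
Proof.
move=> [mu Iu]; split; first exact: measurable_funM (measurable_cst c) mu.
apply: (Int_ext _ (IntZ (c ^+ 2) Iu)) => x; rewrite exprMn //.
Qed.

Lemma L2_dom u v : measurable_fun setT u -> Int v -> (forall x, u x ^+ 2 <= v x) -> L2 u.
Proof.
move=> mu Iv uv; split => //; apply: (Int_le _ Iv) => [|x].
  exact: measurable_funX.
by rewrite ger0_norm ?sqr_ge0.
Qed.


Section tower.
Variable S : set T -> Prop.
Hypothesis hS : forall A, S A -> measurable A.
Variables gg y : T -> R.
Hypothesis Ig : Int gg.
Hypothesis Iy : Int y.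
Hypothesis hA : forall A, S A ->
  (\int[P]_(x in A) (gg x)%:E = \int[P]_(x in A) (y x)%:E)%E.

Definition Good (phi : T -> R) :=
  [/\ Int (fun x => phi x * gg x), Int (fun x => phi x * y x) &
      Ex (fun x => phi x * gg x) = Ex (fun x => phi x * y x)].

Lemma Int_indic A (z : T -> R) : measurable A -> Int z -> Int (fun x => \1_A x * z x).
Proof.
move=> mA Iz.
have : P.-integrable setT ((EFin \o z) \_ A).
  by apply/(integrable_mkcond _ mA); exact: (integrableS measurableT mA (@subsetT _ A) Iz).
apply: eq_integrable => // x _ /=; rewrite /restrict indicE.
by case: (x \in A); rewrite /= ?mul1r ?mul0r.
Qed.

Lemma Ex_indic A (z : T -> R) : Ex (fun x => \1_A x * z x) = fine (\int[P]_(x in A) (z x)%:E)%E.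
Proof.
rewrite /Ex /Rintegral [in RHS]integral_mkcond; congr fine; apply: eq_integral => x _.
by rewrite /restrict indicE; case: (x \in A); rewrite /= ?mul1r ?mul0r.
Qed.

Lemma good_indic A : S A -> Good (fun x => \1_A x).
Proof.
move=> SA; split; [exact: Int_indic (hS SA) Ig|exact: Int_indic (hS SA) Iy|].
by rewrite !Ex_indic hA.
Qed.

Lemma good_ext phi psi : (forall x, phi x = psi x) -> Good phi -> Good psi.
Proof. by move=> e; have -> : psi = phi by apply/funext => x; rewrite e. Qed.

Lemma good_scale c phi : Good phi -> Good (fun x => c * phi x).
Proof.
move=> [I1 I2 E]; split.
- by apply: (Int_ext _ (IntZ c I1)) => x; rewrite mulrA.
- by apply: (Int_ext _ (IntZ c I2)) => x; rewrite mulrA.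
- rewrite (Ex_ext (g := fun x => c * (phi x * gg x))); last by move=> x; rewrite mulrA.
  rewrite (Ex_ext (f := fun x => c * phi x * y x) (g := fun x => c * (phi x * y x))); last by move=> x; rewrite mulrA.
  by rewrite !ExZ // E.
Qed.

Lemma good_add phi psi : Good phi -> Good psi -> Good (fun x => phi x + psi x).
Proof.
move=> [I1 I2 E] [J1 J2 F]; split.
- by apply: (Int_ext _ (IntD I1 J1)) => x; rewrite mulrDl.
- by apply: (Int_ext _ (IntD I2 J2)) => x; rewrite mulrDl.
- rewrite (Ex_ext (g := fun x => phi x * gg x + psi x * gg x)); last by move=> x; rewrite mulrDl.
  rewrite (Ex_ext (f := fun x => (phi x + psi x) * y x) (g := fun x => phi x * y x + psi x * y x)); last by move=> x; rewrite mulrDl.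
  by rewrite !ExD // E F.
Qed.

Lemma good0 : Good (fun _ => 0).
Proof.
split; [apply: (Int_ext _ (Int_cst 0)) => x; by rewrite mul0r
       |apply: (Int_ext _ (Int_cst 0)) => x; by rewrite mul0r|].
by rewrite (Ex_ext (g := fun _ => 0)) => [|x]; [rewrite (Ex_ext (f := fun x => 0 * y x) (g := fun _ => 0))// => x|]; rewrite mul0r.
Qed.

Lemma good_sum (I : Type) (s : seq I) (Q : pred I) (F : I -> T -> R) :
  (forall i, Good (F i)) -> Good (fun x => \sum_(i <- s | Q i) F i x).
Proof.
move=> GF; elim: s => [|i s IH].
  by apply: (good_ext _ good0) => x; rewrite big_nil.
case Qi: (Q i).
  by apply: (good_ext _ (good_add (GF i) IH)) => x; rewrite big_cons Qi.
by apply: (good_ext _ IH) => x; rewrite big_cons Qi.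
Qed.

Variable h : T -> R.
Hypothesis hpre : forall B, measurable B -> S (h @^-1` B).

Lemma good_approx n : Good (approx setT (EFin \o h) n).
Proof.
rewrite /approx; apply: good_add.
  apply: good_sum => k; apply: good_scale; apply: good_indic.
  rewrite /dyadic_approx; case: ifP => _.
    have -> : setT `&` [set x | (EFin \o h) x \in EFin @` [set` dyadic_itv R n k]]
            = h @^-1` [set` dyadic_itv R n k].
      apply/seteqP; split => x /=.
        by move=> [_]; rewrite inE => -[r rI [<-]].
      by move=> hx; split => //; rewrite inE; exists (h x).
    apply: hpre; exact: measurable_itv.
  have -> : @set0 T = h @^-1` set0 by [].
  exact: hpre.
apply: good_scale; apply: good_indic; rewrite /integer_approx.
have -> : setT `&` [set x | (n%:R%:E <= (EFin \o h) x)%E] = h @^-1` `[n%:R, +oo[%classic.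
  by apply/seteqP; split => x /=; rewrite in_itv /= andbT lee_fin => // -[].
apply: hpre; exact: measurable_itv.
Qed.

Let phi n := approx setT (EFin \o h) n.

Lemma phi_ge0 n x : 0 <= phi n x.
Proof.
rewrite /phi /approx; apply: addr_ge0.
  by apply: sumr_ge0 => k _; rewrite indicE !mulr_ge0.
by rewrite indicE mulr_ge0.
Qed.

Hypothesis h0 : forall x, 0 <= h x.

Lemma phi_le n x : phi n x <= h x.
Proof. by rewrite -lee_fin; apply: le_approx => // z _; rewrite lee_fin. Qed.

Lemma phi_cvg x : phi^~ x @ \oo --> h x.
Proof.
have := @cvg_approx _ _ _ setT (EFin \o h) x (fun z _ => h0 z) Logic.I (ltry _).
by [].
Qed.

Lemma key_cvg (z : T -> R) : (forall n, Int (fun x => phi n x * z x)) ->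
  Int (fun x => h x * z x) ->
  (\int[P]_x ((phi n x * z x)%:E))%E @[n --> \oo] --> (\int[P]_x ((h x * z x)%:E))%E.
Proof.
move=> In Ih.
have ff : {ae P, forall x, setT x -> (fun n => (phi n x * z x)%:E) @ \oo --> (h x * z x)%:E}.
  apply: aeW => x _.
  apply: cvg_EFin; first by apply: nearW.
  rewrite (_ : fine \o _ = (fun n => phi n x * z x)); last by apply/funext.
  by apply: cvgMr_tmp; exact: phi_cvg.
have fg : {ae P, forall x n, setT x -> (`|(phi n x * z x)%:E| <= (`|h x * z x|)%:E)%E}.
  apply: aeW => x n _; rewrite /= lee_fin !normrM ler_wpM2r //.
  by rewrite !ger0_norm ?phi_le ?phi_ge0.
have DC := @dominated_convergence _ _ _ P setT measurableT
  (fun n x => (phi n x * z x)%:E) (fun x => (h x * z x)%:E) (fun x => (`|h x * z x|)%:E)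
  (fun n => measurable_int _ (In n)) (measurable_int _ Ih) ff (integrable_abse Ih) fg.
by case: DC.
Qed.

Lemma tower_nonneg : Int (fun x => h x * gg x) -> Int (fun x => h x * y x) ->
  Ex (fun x => h x * gg x) = Ex (fun x => h x * y x).
Proof.
move=> Ihg Ihy.
have G n := good_approx n.
have c1 := key_cvg (fun n => match G n with And3 a _ _ => a end) Ihg.
have c2 := key_cvg (fun n => match G n with And3 _ a _ => a end) Ihy.
have e : (fun n => \int[P]_x ((phi n x * gg x)%:E))%E = (fun n => \int[P]_x ((phi n x * y x)%:E))%E.
  apply/funext => n; case: (G n) => a b c.
  by rewrite (Ex_EFin a) (Ex_EFin b) c.
rewrite e in c1.
have := cvg_unique (@ereal_hausdorff R) c1 c2.
move=> H; have := H (fmap_proper_filter _ _).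
move=> /(_ eventually_filter).
by rewrite (Ex_EFin Ihg) (Ex_EFin Ihy) => -[->].
Qed.

End tower.

Definition fpos (a : R) := (`|a| + a) / 2.
Definition fneg (a : R) := (`|a| - a) / 2.

Lemma fpos_ge0 a : 0 <= fpos a.
Proof. rewrite /fpos; have := ler_norm (- a); rewrite normrN; lra. Qed.
Lemma fneg_ge0 a : 0 <= fneg a.
Proof. rewrite /fneg; have := ler_norm a; lra. Qed.
Lemma fposneg a : fpos a - fneg a = a.
Proof. rewrite /fpos /fneg; lra. Qed.
Lemma norm_fpos a : `|fpos a| <= `|a|.
Proof. rewrite ger0_norm ?fpos_ge0 // /fpos; have := ler_norm a; lra. Qed.
Lemma norm_fneg a : `|fneg a| <= `|a|.
Proof. rewrite ger0_norm ?fneg_ge0 // /fneg; have := ler_norm (- a); rewrite normrN; lra. Qed.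
Lemma fpos_meas : measurable_fun setT fpos.
Proof.
rewrite /fpos; apply: measurable_funM; last exact: measurable_cst.
by apply: measurable_funD => //; exact: measurable_id.
Qed.
Lemma fneg_meas : measurable_fun setT fneg.
Proof.
rewrite /fneg; apply: measurable_funM; last exact: measurable_cst.
by apply: measurable_funB => //; exact: measurable_id.
Qed.

Lemma Int_norm f : Int f -> Int (fun x => `|f x|).
Proof. by move=> If; exact: integrable_norm. Qed.

Lemma tower (S : set T -> Prop) (hS : forall A, S A -> measurable A) (gg y : T -> R)
  (Ig : Int gg) (Iy : Int y)
  (hA : forall A, S A -> (\int[P]_(x in A) (gg x)%:E = \int[P]_(x in A) (y x)%:E)%E)
  (h : T -> R) (hpre : forall B, measurable B -> S (h @^-1` B)) :
  Int (fun x => h x * gg x) -> Int (fun x => h x * y x) ->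
  Ex (fun x => h x * gg x) = Ex (fun x => h x * y x).
Proof.
move=> Ihg Ihy.
have mh : measurable_fun setT h.
  by move=> _ B mB; rewrite setTI; exact: hS (hpre _ mB).
pose hp x := fpos (h x); pose hn x := fneg (h x).
have pre1 : forall B, measurable B -> S (hp @^-1` B).
  move=> B mB; have := hpre _ (fpos_meas measurableT mB); rewrite setTI.
  by [].
have pre2 : forall B, measurable B -> S (hn @^-1` B).
  move=> B mB; have := hpre _ (fneg_meas measurableT mB); rewrite setTI.
  by [].
have mhp : measurable_fun setT hp by exact: measurableT_comp fpos_meas mh.
have mhn : measurable_fun setT hn by exact: measurableT_comp fneg_meas mh.
have I1 z : Int z -> Int (fun x => h x * z x) -> Int (fun x => hp x * z x).
  move=> Iz Ihz; apply: (Int_le _ (Int_norm Ihz)) => [|x].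
    by apply: measurable_funM => //; exact: Int_meas.
  by rewrite (normrM (hp x)) (normrM (h x)) ler_wpM2r //; exact: norm_fpos.
have I2 z : Int z -> Int (fun x => h x * z x) -> Int (fun x => hn x * z x).
  move=> Iz Ihz; apply: (Int_le _ (Int_norm Ihz)) => [|x].
    by apply: measurable_funM => //; exact: Int_meas.
  by rewrite (normrM (hn x)) (normrM (h x)) ler_wpM2r //; exact: norm_fneg.
have E z : Int z -> Int (fun x => h x * z x) ->
    Ex (fun x => h x * z x) = Ex (fun x => hp x * z x) - Ex (fun x => hn x * z x).
  move=> Iz Ihz; rewrite -ExB; [|exact: I1|exact: I2].
  by apply: Ex_ext => x; rewrite -mulrBl /hp /hn fposneg.
rewrite (E _ Ig Ihg) (E _ Iy Ihy).
have hp0 x : 0 <= hp x by exact: fpos_ge0.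
have hn0 x : 0 <= hn x by exact: fneg_ge0.
rewrite (tower_nonneg hS Ig Iy hA pre1 hp0 (I1 _ Ig Ihg) (I1 _ Iy Ihy)).
by rewrite (tower_nonneg hS Ig Iy hA pre2 hn0 (I2 _ Ig Ihg) (I2 _ Iy Ihy)).
Qed.

End toolkit.


Section vec.
Context {R : realType} {d : nat}.
Implicit Types (u v w z m : 'rV[R]_d).

Lemma dotv_ge0 u : 0 <= dotv u u.
Proof. by apply: sumr_ge0 => i _; rewrite -expr2 sqr_ge0. Qed.

Lemma enorm_sq u : enorm u ^+ 2 = dotv u u.
Proof. by rewrite /enorm sqr_sqrtr // dotv_ge0. Qed.

Lemma enorm_ge0 u : 0 <= enorm u.
Proof. exact: sqrtr_ge0. Qed.

Lemma dotvDr u v w : dotv u (v + w) = dotv u v + dotv u w.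
Proof. by rewrite /dotv -big_split /=; apply: eq_bigr => i _; rewrite mxE mulrDr. Qed.

Lemma dotvDl u v w : dotv (v + w) u = dotv v u + dotv w u.
Proof. by rewrite /dotv -big_split /=; apply: eq_bigr => i _; rewrite mxE mulrDl. Qed.

Lemma dotvZr a u v : dotv u (a *: v) = a * dotv u v.
Proof. by rewrite /dotv mulr_sumr; apply: eq_bigr => i _; rewrite mxE mulrCA. Qed.

Lemma dotvZl a u v : dotv (a *: v) u = a * dotv v u.
Proof. by rewrite /dotv mulr_sumr; apply: eq_bigr => i _; rewrite mxE mulrA. Qed.

Lemma dotvNr u v : dotv u (- v) = - dotv u v.
Proof. by rewrite -scaleN1r dotvZr mulN1r. Qed.

Lemma dotvNl u v : dotv (- v) u = - dotv v u.
Proof. by rewrite -scaleN1r dotvZl mulN1r. Qed.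

Lemma dotvBr u v w : dotv u (v - w) = dotv u v - dotv u w.
Proof. by rewrite dotvDr dotvNr. Qed.

Lemma dotvBl u v w : dotv (v - w) u = dotv v u - dotv w u.
Proof. by rewrite dotvDl dotvNl. Qed.

Lemma dotv0r u : dotv u 0 = 0.
Proof. by rewrite /dotv big1 // => i _; rewrite mxE mulr0. Qed.

Lemma coord_le u i : u 0 i ^+ 2 <= dotv u u.
Proof.
rewrite /dotv (bigD1 i) //= -expr2 lerDl.
by apply: sumr_ge0 => j _; rewrite -expr2 sqr_ge0.
Qed.

Lemma dotv_sum2 u v : dotv (u + v) (u + v) <= 2 * dotv u u + 2 * dotv v v.
Proof.
rewrite /dotv !mulr_sumr -big_split /=; apply: ler_sum => i _.
rewrite mxE; have := sqr_ge0 (u 0 i - v 0 i); nra.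
Qed.

Lemma dotv_eq0 u : dotv u u = 0 -> forall i, u 0 i = 0.
Proof.
move=> /eqP; rewrite /dotv psumr_eq0; last by move=> i _; rewrite -expr2 sqr_ge0.
move=> /allP H i; have := H i (mem_index_enum _); rewrite /= -expr2 sqrf_eq0.
by move/eqP.
Qed.

Lemma young_dot (L : R) u z m : 0 <= L -> dotv u u <= L ^+ 2 * dotv z z ->
  dotv u m <= L / 2 * (dotv z z + dotv m m).
Proof.
move=> L0 uz; have [L00|Lp] := eqVneq L 0.
  rewrite L00 in uz *.
  have u0 : dotv u u = 0.
    by apply/eqP; rewrite eq_le dotv_ge0 andbT; move: uz; rewrite expr2 !mul0r.
  rewrite /dotv big1 ?mul0r // => i _; by rewrite (dotv_eq0 u0) mul0r.
have Lpos : 0 < L by rewrite lt_neqAle eq_sym Lp.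
have H : 2 * dotv u m <= dotv u u / L + L * dotv m m.
  rewrite /dotv mulr_sumr mulr_sumr mulr_suml -big_split /=; apply: ler_sum => i _.
  rewrite -subr_ge0.
  have -> : u 0 i * u 0 i / L + L * (m 0 i * m 0 i) - 2 * (u 0 i * m 0 i)
          = (u 0 i - L * m 0 i) ^+ 2 / L by field; rewrite gt_eqF.
  by rewrite divr_ge0 ?sqr_ge0 // ltW.
have H2 : dotv u u / L <= L * dotv z z.
  by rewrite ler_pdivrMr //; apply: (le_trans uz); rewrite expr2; lra.
have := dotv_ge0 m; nra.
Qed.

Lemma dot_lip (L : R) u z : 0 <= L -> enorm u <= L * enorm z -> dotv u u <= L ^+ 2 * dotv z z.
Proof.
move=> L0 h; rewrite -!enorm_sq; have := enorm_ge0 u; have := enorm_ge0 z.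
rewrite -exprMn; move=> h1 h2; rewrite ler_pXn2r ?nnegrE ?mulr_ge0 //.
Qed.

End vec.


Section main.
Context (R : realType) (d : nat) (gradf : 'rV[R]_d -> 'rV[R]_d) (L : R)
  (dT : measure_display) (T : measurableType dT) (P : probability T R)
  (g : nat -> T -> 'rV[R]_d) (x1 : 'rV[R]_d) (mu lam G : R) (eta : nat -> R).
Hypothesis hL : 0 <= L.
Hypothesis hLip : forall x y, enorm (gradf x - gradf y) <= L * enorm (x - y).
Hypothesis hmu : 0 <= mu < 1.
Hypothesis hlam : 0 <= lam <= 1 / (1 - mu).
Hypothesis heta : forall t, (1 <= t)%N -> 0 < eta t.
Hypothesis hgmeas : forall t (i : 'I_d), (1 <= t)%N -> measurable_fun setT (fun w => g t w 0 i).
Hypothesis hcond : forall t, (1 <= t)%N ->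
     cond_exp_past P g t (fun w => gradf (sum_x mu lam eta x1 (g^~ w) t)).
Hypothesis hG : forall t, (1 <= t)%N ->
     (\int[P]_w ((enorm (g t w)) ^+ 2)%:E <= (G ^+ 2)%:E)%E.

Let st n w := sum_state mu lam eta x1 (g^~ w) n.
Let X t w := sum_x mu lam eta x1 (g^~ w) t.
Let M t w := sum_m mu lam eta x1 (g^~ w) t.
Let Y t w := gradf (X t w).

Definition L2v (V : T -> 'rV[R]_d) := forall i, L2 P (fun w => V w 0 i).

Lemma L2_ext (u v : T -> R) : (forall x, u x = v x) -> L2 P u -> L2 P v.
Proof. by move=> e; have -> : v = u by apply/funext => x; rewrite e. Qed.

Lemma L2v_cst (c : 'rV[R]_d) : L2v (fun _ => c).
Proof. by move=> i; exact: L2_cst. Qed.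

Lemma L2vD V W : L2v V -> L2v W -> L2v (fun w => V w + W w).
Proof. by move=> hV hW i; apply: (L2_ext _ (L2D (hV i) (hW i))) => x; rewrite mxE. Qed.

Lemma L2vZ c V : L2v V -> L2v (fun w => c *: V w).
Proof. by move=> hV i; apply: (L2_ext _ (L2Z c (hV i))) => x; rewrite mxE. Qed.

Lemma L2vB V W : L2v V -> L2v W -> L2v (fun w => V w - W w).
Proof.
move=> hV hW; apply: L2vD => // i.
by apply: (L2_ext _ (L2Z (-1) (hW i))) => x; rewrite mxE mulN1r.
Qed.

Lemma Int_dotv V W : L2v V -> L2v W -> Int P (fun w => dotv (V w) (W w)).
Proof. by move=> hV hW; apply: Int_sum => i; exact: L2_Int_mul. Qed.

Lemma Ex_dotv V W : L2v V -> L2v W ->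
  Ex P (fun w => dotv (V w) (W w)) = \sum_i Ex P (fun w => V w 0 i * W w 0 i).
Proof. by move=> hV hW; apply: Ex_sum => i; exact: L2_Int_mul. Qed.

Lemma meas_dotv V W : L2v V -> L2v W -> measurable_fun setT (fun w => dotv (V w) (W w)).
Proof. by move=> hV hW; exact: Int_meas (Int_dotv hV hW). Qed.

Lemma L2v_g k : (1 <= k)%N -> L2v (g k).
Proof.
move=> hk.
have Iv : Int P (fun w => dotv (g k w) (g k w)).
  have mv : measurable_fun setT (fun w => dotv (g k w) (g k w)).
    apply: measurable_sum => i; apply: measurable_funM; exact: hgmeas.
  apply/integrableP; split; first exact/measurable_EFinP.
  have -> : (fun x => `|(EFin \o (fun w => dotv (g k w) (g k w))) x|%E)
          = (fun w => (enorm (g k w) ^+ 2)%:E).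
    by apply/funext => w /=; rewrite enorm_sq ger0_norm // dotv_ge0.
  exact: (le_lt_trans (hG hk) (ltry _)).
move=> i; apply: (L2_dom (hgmeas i hk) Iv) => w; exact: coord_le.
Qed.

Lemma L2v_state n : L2v (fun w => (st n w).1) /\ L2v (fun w => (st n w).2).
Proof.
elim: n => [|n [IH1 IH2]].
  split; first exact: L2v_cst.
  by move=> i; apply: (L2_ext _ (L2_cst P 0)) => x /=; rewrite mxE.
have hg := L2v_g (ltn0Sn n).
have H2 : L2v (fun w => (st n.+1 w).2) by apply: L2vB; [exact: L2vZ|exact: L2vZ].
split => //.
by apply: L2vD; [apply: L2vB => //; exact: L2vZ|exact: L2vZ].
Qed.

Lemma L2v_X t : L2v (X t).
Proof. exact: (L2v_state t.-1).1. Qed.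

Lemma L2v_M t : L2v (M t).
Proof. exact: (L2v_state t).2. Qed.

Let S t := <<s past_gen g t >>.

Lemma S_meas t A : S t A -> measurable A.
Proof.
apply: smallest_sub; first exact: sigma_algebra_measurable.
move=> _ [k [i [B [/andP[hk _] mB ->]]]].
by have := hgmeas i hk measurableT mB; rewrite setTI.
Qed.

Lemma L2v_Y t : (1 <= t)%N -> L2v (Y t).
Proof.
move=> ht i.
have [_ _ hpre _] := hcond ht i.
have mY : measurable_fun setT (fun w => Y t w 0 i).
  by move=> _ B mB; rewrite setTI; exact: S_meas (hpre B mB).
pose C := dotv (gradf x1) (gradf x1).
pose D w := dotv (X t w - x1) (X t w - x1).
have hD : L2v (fun w => X t w - x1) by apply: L2vB; [exact: L2v_X|exact: L2v_cst].
have ID : Int P D := Int_dotv hD hD.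
have IB : Int P (fun w => 2 * C + 2 * (L ^+ 2 * D w)).
  by apply: IntD; [exact: Int_cst|apply: IntZ; exact: IntZ].
apply: (L2_dom mY IB) => w.
apply: (le_trans (coord_le _ i)).
have e : Y t w = gradf x1 + (Y t w - gradf x1) by rewrite addrC subrK.
rewrite [in X in X <= _]e; apply: (le_trans (dotv_sum2 _ _)).
rewrite lerD2l ler_pM2l //; apply: dot_lip => //; exact: hLip.
Qed.

Lemma tower_t t : (1 <= t)%N ->
  Ex P (fun w => dotv (Y t w) (g t w)) = Ex P (fun w => dotv (Y t w) (Y t w)).
Proof.
move=> ht; have hY := L2v_Y ht; have hg := L2v_g ht.
rewrite (Ex_dotv hY hg) (Ex_dotv hY hY).
apply: eq_bigr => i _.
have [Ig Iy hpre hA] := hcond ht i.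
apply: (tower (S_meas (t:=t)) Ig Iy hA hpre).
- exact: L2_Int_mul (L2v_Y ht i) (L2v_g ht i).
- exact: L2_Int_mul (L2v_Y ht i) (L2v_Y ht i).
Qed.

Let a t := Ex P (fun w => dotv (Y t w) (M t w)).
Let b t := Ex P (fun w => dotv (Y t w) (Y t w)).
Let c t := Ex P (fun w => dotv (M t w) (M t w)).
Let e t := Ex P (fun w => dotv (Y t w) (M t.-1 w)).

Lemma Ex0 : Ex P (fun _ => 0) = 0.
Proof. by rewrite /Ex Rintegral_cst // mul0r. Qed.

Lemma rec1 t : (1 <= t)%N -> a t = mu * e t - eta t * b t.
Proof.
case: t => // n _.
have hY := L2v_Y (ltn0Sn n); have hM := L2v_M n; have hg := L2v_g (ltn0Sn n).
rewrite /a /e /b -(tower_t (ltn0Sn n)) -ExZ; last exact: Int_dotv.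
rewrite -ExZ; last exact: Int_dotv.
rewrite -ExB; [|apply: IntZ; exact: Int_dotv|apply: IntZ; exact: Int_dotv].
apply: Ex_ext => w /=.
by rewrite /M /= /sum_m /= dotvBr !dotvZr.
Qed.

Lemma e1 : e 1 = 0.
Proof.
rewrite /e -Ex0; apply: Ex_ext => w.
by rewrite /M /sum_m /= dotv0r.
Qed.

Lemma Eg2 t : (1 <= t)%N -> Ex P (fun w => dotv (g t w) (g t w)) <= G ^+ 2.
Proof.
move=> ht; have hg := L2v_g ht.
rewrite -lee_fin -Ex_EFin; last exact: Int_dotv.
apply: le_trans (hG ht); rewrite le_eqVlt; apply/orP; left; apply/eqP.
by apply: eq_integral => w _; rewrite enorm_sq.
Qed.

Let kap := 1 - (1 - mu) * lam.

Lemma kap01 : 0 <= kap <= 1.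
Proof.
case/andP: hmu => mu0 mu1; case/andP: hlam => l0 l1.
have p : 0 < 1 - mu by rewrite subr_gt0.
have : (1 - mu) * lam <= 1.
  by rewrite mulrC -ler_pdivlMr // mul1r -[X in _ <= X]mul1r.
rewrite /kap; move=> h; apply/andP; split; first lra.
have : 0 <= (1 - mu) * lam by rewrite mulr_ge0 // ltW.
lra.
Qed.

Lemma pointwise n w :
  dotv (Y n.+2 w) (M n.+1 w) <= dotv (Y n.+1 w) (M n.+1 w)
    + L * (lam * eta n.+1) ^+ 2 * dotv (g n.+1 w) (g n.+1 w)
    + 2 * L * dotv (M n.+1 w) (M n.+1 w).
Proof.
have ez : X n.+2 w - X n.+1 w = (- (lam * eta n.+1)) *: g n.+1 w + kap *: M n.+1 w.
  rewrite /X /M /sum_x /sum_m /= scaleNr.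
  by rewrite addrC !addrA addNr add0r.
have e0 : dotv (Y n.+2 w) (M n.+1 w) =
   dotv (Y n.+1 w) (M n.+1 w) + dotv (Y n.+2 w - Y n.+1 w) (M n.+1 w).
  by rewrite dotvBl addrC subrK.
rewrite e0 -addrA lerD2l.
have hy := young_dot (M n.+1 w) hL (dot_lip hL (hLip (X n.+2 w) (X n.+1 w))).
apply: (le_trans hy); rewrite ez.
have hs := dotv_sum2 ((- (lam * eta n.+1)) *: g n.+1 w) (kap *: M n.+1 w).
set DD := dotv _ _ in hs *.
rewrite !dotvZl !dotvZr in hs.
have G0 := dotv_ge0 (g n.+1 w); have M0 := dotv_ge0 (M n.+1 w).
case/andP: kap01 => k0 k1.
set GG := dotv (g n.+1 w) (g n.+1 w) in hs G0 *.
set MM := dotv (M n.+1 w) (M n.+1 w) in hs M0 *.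
set A := lam * eta n.+1 in hs *.
have k2 : kap * kap <= 1 by nra.
have LM : 0 <= L * MM by rewrite mulr_ge0.
have hD : DD <= 2 * (A * A * GG) + 2 * MM.
  have : kap * (kap * MM) <= MM by nra.
  move: hs; rewrite ?mulNr ?mulrN ?opprK; lra.
have L2 : 0 <= L / 2 by rewrite divr_ge0.
apply: (@le_trans _ _ (L / 2 * (2 * (A * A * GG) + 3 * MM))).
  by rewrite ler_wpM2l //; lra.
rewrite expr2; lra.
Qed.

Lemma L2v_Y' t : L2v (Y t).
Proof. case: t => [|n]; [exact: (L2v_cst (gradf x1))|exact: L2v_Y]. Qed.

Lemma rec2 n : e n.+2 <= a n.+1 + 2 * L * c n.+1 + L * lam ^+ 2 * G ^+ 2 * eta n.+1 ^+ 2.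
Proof.
have hY1 := L2v_Y' n.+1; have hY2 := L2v_Y' n.+2; have hM := L2v_M n.+1.
have hg := L2v_g (ltn0Sn n).
have I1 := Int_dotv hY1 hM; have I2 := Int_dotv hg hg; have I3 := Int_dotv hM hM.
apply: (@le_trans _ _ (Ex P (fun w => dotv (Y n.+1 w) (M n.+1 w)
    + L * (lam * eta n.+1) ^+ 2 * dotv (g n.+1 w) (g n.+1 w)
    + 2 * L * dotv (M n.+1 w) (M n.+1 w)))).
  apply: Ex_le; [exact: Int_dotv|apply: IntD; [apply: IntD => //; exact: IntZ|exact: IntZ]|].
  exact: pointwise.
rewrite ExD; [|apply: IntD => //; exact: IntZ|exact: IntZ].
rewrite ExD // ?ExZ //; last exact: IntZ.
rewrite -/(a n.+1) -/(c n.+1).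
have := Eg2 (ltn0Sn n); have := sqr_ge0 (lam * eta n.+1).
move=> h1 h2.
have : L * (lam * eta n.+1) ^+ 2 * Ex P (fun w => dotv (g n.+1 w) (g n.+1 w))
       <= L * (lam * eta n.+1) ^+ 2 * G ^+ 2.
  by rewrite ler_wpM2l // mulr_ge0.
rewrite exprMn; lra.
Qed.

Lemma sumL1 (F : nat -> R) t :
  \sum_(1 <= k < t.+1) mu ^+ (t.+1 - k) * F k = mu * \sum_(1 <= k < t.+1) mu ^+ (t - k) * F k.
Proof.
rewrite mulr_sumr; apply: eq_big_nat => k /andP[_ hk].
by rewrite subSn // exprS mulrA.
Qed.

Lemma sumL2 (F : nat -> R) t :
  \sum_(1 <= k < t.+2) mu ^+ (t.+1 - k) * F k = \sum_(1 <= k < t.+1) mu ^+ (t.+1 - k) * F k + F t.+1.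
Proof. by rewrite big_nat_recr //= subnn expr0 mul1r. Qed.

Definition rhs t := - \sum_(1 <= k < t.+1) mu ^+ (t - k) * (eta k * b k)
  + 2 * L * \sum_(1 <= k < t) mu ^+ (t - k) * c k
  + L * lam ^+ 2 * G ^+ 2 * \sum_(1 <= k < t) mu ^+ (t - k) * eta k ^+ 2.

Lemma main_bound n : a n.+1 <= rhs n.+1.
Proof.
case/andP: hmu => mu0 _.
elim: n => [|n IH].
  rewrite rec1 // e1 /rhs !big_nat1 !big_geq // subnn expr0 !mul1r.
  lra.
rewrite rec1 //.
have H := rec2 n.
have : mu * e n.+2 <= mu * (rhs n.+1 + 2 * L * c n.+1 + L * lam ^+ 2 * G ^+ 2 * eta n.+1 ^+ 2).
  rewrite ler_wpM2l //; lra.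
rewrite /rhs (sumL2 (fun k => eta k * b k) n.+1) (sumL1 (fun k => eta k * b k) n.+1).
rewrite (sumL1 c n.+1) (sumL1 (fun k => eta k ^+ 2) n.+1) (sumL2 c n) (sumL2 (fun k => eta k ^+ 2) n).
move=> hh; lra.
Qed.

Lemma final (t : nat) (ht : (1 <= t)%N) :
  (\int[P]_w (dotv (gradf (sum_x mu lam eta x1 (g^~ w) t))
                   (sum_m mu lam eta x1 (g^~ w) t))%:E
   <= - (\sum_(1 <= k < t.+1)
           (mu ^+ (t - k) * eta k)%:E
           * \int[P]_w ((enorm (gradf (sum_x mu lam eta x1 (g^~ w) k))) ^+ 2)%:E)
      + (2 * L)%:E * (\sum_(1 <= k < t)
           (mu ^+ (t - k))%:E
           * \int[P]_w ((enorm (sum_m mu lam eta x1 (g^~ w) k)) ^+ 2)%:E)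
      + (L * lam ^+ 2 * G ^+ 2 * \sum_(1 <= k < t) mu ^+ (t - k) * eta k ^+ 2)%:E)%E.
Proof.
have Eb k : (\int[P]_w ((enorm (gradf (sum_x mu lam eta x1 (g^~ w) k))) ^+ 2)%:E)%E = (b k)%:E.
  rewrite /b -Ex_EFin; last exact: Int_dotv (L2v_Y' k) (L2v_Y' k).
  by apply: eq_integral => w _; rewrite enorm_sq.
have Ec k : (\int[P]_w ((enorm (sum_m mu lam eta x1 (g^~ w) k)) ^+ 2)%:E)%E = (c k)%:E.
  rewrite /c -Ex_EFin; last exact: Int_dotv (L2v_M k) (L2v_M k).
  by apply: eq_integral => w _; rewrite enorm_sq.
rewrite (Ex_EFin (Int_dotv (L2v_Y' t) (L2v_M t))).
rewrite (eq_bigr (fun k => (mu ^+ (t - k) * (eta k * b k))%:E)); last first.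
  by move=> k _; rewrite Eb -EFinM mulrA.
rewrite [X in ((2 * L)%:E * X)%E](eq_bigr (fun k => (mu ^+ (t - k) * c k)%:E)); last first.
  by move=> k _; rewrite Ec -EFinM.
rewrite !sumEFin -EFinN -EFinM -!EFinD lee_fin.
case: t ht => // n _.
have := main_bound n; rewrite /rhs.
by [].
Qed.

End main.

Unset Implicit Arguments.

Theorem lemma3p4 (R : realType) (d : nat)
  (f : 'rV[R]_d -> R) (gradf : 'rV[R]_d -> 'rV[R]_d) (L : R)
  (dT : measure_display) (T : measurableType dT) (P : probability T R)
  (g : nat -> T -> 'rV[R]_d) (x1 : 'rV[R]_d)
  (mu lam G : R) (eta : nat -> R)
  (hf : forall x, differentiable f x /\ (forall v, 'd f x v = dotv (gradf x) v))
  (hL : 0 <= L)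
  (hLip : forall x y, enorm (gradf x - gradf y) <= L * enorm (x - y))
  (hmu : 0 <= mu < 1)
  (hlam : 0 <= lam <= 1 / (1 - mu))
  (heta : forall t, (1 <= t)%N -> 0 < eta t)
  (hgmeas : forall t (i : 'I_d), (1 <= t)%N -> measurable_fun setT (fun w => g t w 0 i))
  (hcond : forall t, (1 <= t)%N ->
     cond_exp_past P g t (fun w => gradf (sum_x mu lam eta x1 (g^~ w) t)))
  (hG : forall t, (1 <= t)%N ->
     (\int[P]_w ((enorm (g t w)) ^+ 2)%:E <= (G ^+ 2)%:E)%E)
  (t : nat) (ht : (1 <= t)%N) :
  (\int[P]_w (dotv (gradf (sum_x mu lam eta x1 (g^~ w) t))
                   (sum_m mu lam eta x1 (g^~ w) t))%:E
   <= - (\sum_(1 <= k < t.+1)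
           (mu ^+ (t - k) * eta k)%:E
           * \int[P]_w ((enorm (gradf (sum_x mu lam eta x1 (g^~ w) k))) ^+ 2)%:E)
      + (2 * L)%:E * (\sum_(1 <= k < t)
           (mu ^+ (t - k))%:E
           * \int[P]_w ((enorm (sum_m mu lam eta x1 (g^~ w) k)) ^+ 2)%:E)
      + (L * lam ^+ 2 * G ^+ 2 * \sum_(1 <= k < t) mu ^+ (t - k) * eta k ^+ 2)%:E)%E.
Proof.
exact: (final hL hLip hmu hlam hgmeas hcond hG ht).
Qed.
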